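(* Let $X$ be a real Banach space and $A: X\rightrightarrows X^*$ maximal monotone. For every $w\in\mathrm{dom}(A)$, $v^*\in\mathrm{Im}(A)$ and $(x,x^* )\in X\times X^*$: (i) $F_A(x,v^* )\le g_{A,v^*}^*(x)\le P_A(x,v^* )$; (ii) $F_A(w,x^* )\le f_{A,w}^*(x^* )\le P_A(w,x^* )$.
   Context: $F_A(x,x^* )=\sup_{(y,y^* )\in\mathrm{Gr}(A)}\{\langle y,x^*\rangle+\langle x,y^*\rangle-\langle y,y^*\rangle\}$. Let $\phi(x,x^* )=\langle x,x^*\rangle$ if $(x,x^* )\in\mathrm{Gr}(A)$ and $+\infty$ otherwise; $P_A$ is the restriction to $X\times X^*$ of the biconjugate $\phi^{**}$. $f_{A,w}(x)=\inf_{a^*\in X^*}\{P_A(x,a^* )-\langle w,a^*\rangle\}$ and $g_{A,v^*}(x^* )=\inf_{a\in X}\{P_A(a,x^* )-\langle a,v^*\rangle\}$. The conjugates are $f_{A,w}^*(x^* )=\sup_{y\in X}\{\langle y,x^*\rangle-f_{A,w}(y)\}$ and $g_{A,v^*}^*(x)=\sup_{y^*\in X^*}\{\langle x,y^*\rangle-g_{A,v^*}(y^* )\}$. *)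

(* Defs.v *)
From HB Require Import structures.
From mathcomp Require Import all_boot all_order all_algebra.
From mathcomp Require Import all_classical all_reals all_analysis.
Set Implicit Arguments. Unset Strict Implicit. Unset Printing Implicit Defensive.
Import Order.TTheory GRing.Theory Num.Theory.
Import numFieldNormedType.Exports.
Local Open Scope classical_set_scope.
Local Open Scope ring_scope.

Section Fitz.
Variables (R : realType) (X : normedModType R).

Definition lin_fun (f : X -> R) : Prop :=
  forall (a : R) (u v : X), f (a *: u + v) = a * f u + f v.
Definition dual : set (X -> R) := [set f | lin_fun f /\ continuous f].

Definition dnorm (f : X -> R) : \bar R :=
  ereal_sup [set (`|f x|)%:E | x in [set x : X | `|x| <= 1]].

Definition bidual : set ((X -> R) -> R) :=
  [set Phi | (forall f g, dual f -> dual g -> Phi (f \+ g) = Phi f + Phi g)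
          /\ (forall (a : R) f, dual f -> Phi (fun x => a * f x) = a * Phi f)
          /\ exists C : R, forall f, dual f -> ((`|Phi f|)%:E <= C%:E * dnorm f)%E].

(* A set-valued operator A : X ⇉ X^star given by its graph relation A x x^star. *)
Definition graph (A : X -> (X -> R) -> Prop) : set (X * (X -> R)) :=
  [set p | A p.1 p.2].
Definition domA (A : X -> (X -> R) -> Prop) : set X := [set x | exists xs, A x xs].
Definition ImA (A : X -> (X -> R) -> Prop) : set (X -> R) := [set xs | exists x, A x xs].

Definition monotone_op (A : X -> (X -> R) -> Prop) : Prop :=
  forall x y xs ys, A x xs -> A y ys -> 0 <= xs (x - y) - ys (x - y).

Definition maximal_monotone (A : X -> (X -> R) -> Prop) : Prop :=
  (forall x xs, A x xs -> dual xs) /\ monotone_op A /\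
  (forall x xs, dual xs ->
     (forall y ys, A y ys -> 0 <= xs (x - y) - ys (x - y)) -> A x xs).

Local Open Scope ereal_scope.

Definition Fitz (A : X -> (X -> R) -> Prop) (x : X) (xs : X -> R) : \bar R :=
  ereal_sup [set ((xs p.1 + p.2 x - p.2 p.1)%R)%:E | p in graph A].

Definition phiA (A : X -> (X -> R) -> Prop) (x : X) (xs : X -> R) : \bar R :=
  if `[< A x xs >] then (xs x)%:E else +oo.

(* phi^star on X^star x X^starstar (dual of X x X^star) *)
Definition phistar (A : X -> (X -> R) -> Prop) (ys : X -> R) (Y : (X -> R) -> R)
  : \bar R :=
  ereal_sup [set ((ys p.1 + Y p.2)%R)%:E - phiA A p.1 p.2
            | p in [set p : X * (X -> R) | dual p.2]].

(* P_A = restriction of phi^starstar to X x X^star (via canonical embeddings) *)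
Definition PA (A : X -> (X -> R) -> Prop) (x : X) (xs : X -> R) : \bar R :=
  ereal_sup [set ((q.1 x + q.2 xs)%R)%:E - phistar A q.1 q.2
            | q in [set q : (X -> R) * ((X -> R) -> R) | dual q.1 /\ bidual q.2]].

Definition fAw (A : X -> (X -> R) -> Prop) (w : X) (x : X) : \bar R :=
  ereal_inf [set PA A x a - (a w)%:E | a in dual].

Definition gAv (A : X -> (X -> R) -> Prop) (vs : X -> R) (xs : X -> R) : \bar R :=
  ereal_inf [set PA A a xs - (vs a)%:E | a in [set: X]].

Definition fAw_conj (A : X -> (X -> R) -> Prop) (w : X) (xs : X -> R) : \bar R :=
  ereal_sup [set (xs y)%:E - fAw A w y | y in [set: X]].

Definition gAv_conj (A : X -> (X -> R) -> Prop) (vs : X -> R) (x : X) : \bar R :=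
  ereal_sup [set (ys x)%:E - gAv A vs ys | ys in dual].

End Fitz.

(* Main.v *)
Require Import Defs.
From mathcomp Require Import all_boot all_order all_algebra.
From mathcomp Require Import all_classical all_reals all_analysis.
From mathcomp Require Import lra.
Import Order.TTheory GRing.Theory Num.Theory.
Import numFieldNormedType.Exports.
Local Open Scope classical_set_scope.
Local Open Scope ereal_scope.

Section Helpers.
Variables (R : realType) (X : normedModType R).
Variable (A : X -> (X -> R) -> Prop).
Local Open Scope ring_scope.

Lemma lin0 {f : X -> R} : lin_fun f -> f 0%R = 0%R.
Proof.
move=> lf; have := lf 1%R (0:X) (0:X); rewrite scale1r addr0 mul1r => h; lra.
Qed.

Lemma linZ {f : X -> R} c u : lin_fun f -> f (c *: u) = (c * f u)%R.
Proof. by move=> lf; have := lf c u (0:X); rewrite addr0 (lin0 lf) addr0. Qed.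

Lemma linB {f : X -> R} u v : lin_fun f -> f (u - v) = f u - f v.
Proof.
move=> lf; have := lf (-1) v u; rewrite scaleN1r addrC => ->; lra.
Qed.

Local Open Scope ereal_scope.
Lemma hat_bidual (a : X) : bidual (fun f : X -> R => f a).
Proof.
split; first by [].
split; first by [].
exists `|a|%R => f [lf _].
have [->|a0] := eqVneq a 0%R.
  rewrite (lin0 lf) normr0 normr0 mul0e; apply: le_refl.
set u := (`|a|^-1 *: a).
have na : (0 < `|a|)%R by rewrite normr_gt0.
have fa : f a = (`|a| * f u)%R.
  by rewrite /u (linZ _ _ lf) mulrA mulfV ?mul1r // gt_eqF.
have nu : (`|u| <= 1)%R.
  by rewrite /u normrZ normrV ?unitfE ?gt_eqF // ger0_norm ?invr_ge0 // mulVf // gt_eqF.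
have hu : (`|f u|%:E <= dnorm f).
  by apply: ereal_sup_ubound; exists u.
rewrite fa normrM gtr0_norm // EFinM.
by apply: lee_wpmul2l => //; rewrite lee_fin ltW.
Qed.

Lemma PA_ge x xs ys Y : dual ys -> bidual Y ->
  ((ys x + Y xs)%R)%:E - phistar A ys Y <= PA A x xs.
Proof. by move=> dy bY; apply: ereal_sup_ubound; exists (ys, Y). Qed.

Lemma phistar_le_Fitz (a : X) ys :
  phistar A ys (fun f => f a) <= Fitz A a ys.
Proof.
apply: ge_ereal_sup => _ [p dp <-].
rewrite /phiA; case: asboolP => h; last by rewrite addeNy leNye.
by rewrite -EFinB; apply: ereal_sup_ubound; exists p => //.
Qed.

Lemma Fitz_le_graph y ys : maximal_monotone A -> A y ys -> Fitz A y ys <= (ys y)%:E.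
Proof.
move=> [dA [mA _]] hy; apply: ge_ereal_sup => _ [p hp <-].
rewrite lee_fin.
have := mA _ _ _ _ hy hp.
have [lp _] := dA _ _ hp.
have [ly _] := dA _ _ hy.
rewrite (linB _ _ lp) (linB _ _ ly); lra.
Qed.

Lemma swap (r : R) (P Q : \bar R) : r%:E - Q <= P -> r%:E - P <= Q.
Proof.
case: P => [p||]; case: Q => [q||] //=; rewrite ?lee_fin.
- move=> h; lra.
- by rewrite leey.
- by rewrite addeNy leNye.
Qed.

Lemma PA_le_graph y ys : maximal_monotone A -> A y ys -> PA A y ys <= (ys y)%:E.
Proof.
move=> [dA _] hy; apply: ge_ereal_sup => _ [q [dq bq] <-].
apply: swap; apply: ereal_sup_ubound; exists (y, ys); first exact: (dA _ _ hy).
by rewrite /phiA /= asboolT.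
Qed.

Lemma swap2 (s t : R) (P Q : \bar R) :
  (s + t)%R%:E - P <= Q -> s%:E - P <= Q - t%:E.
Proof.
case: P => [p||]; case: Q => [q||] //=; rewrite ?lee_fin.
- move=> h; lra.
- by move=> _; rewrite addye // leey.
- by move=> _; rewrite addeNy leNye.
Qed.

Lemma Fitz_le_PA a ys : maximal_monotone A -> Fitz A a ys <= PA A a ys.
Proof.
move=> mm; have [dA _] := mm.
apply: ge_ereal_sup => _ [p hp <-].
apply: le_trans _ (PA_ge a ys _ _ (dA _ _ hp) (hat_bidual p.1)).
have h : phistar A p.2 (fun f => f p.1) <= (p.2 p.1)%:E.
  exact: le_trans (phistar_le_Fitz _ _) (Fitz_le_graph _ _ mm hp).
apply: le_trans _ (leeB (le_refl _) h).
rewrite -EFinB lee_fin /=; lra.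
Qed.

Lemma KEY x xs a ys : maximal_monotone A -> dual ys ->
  (ys x + xs a)%R%:E - PA A a ys <= PA A x xs.
Proof.
move=> mm dy; apply: le_trans (PA_ge x xs _ _ dy (hat_bidual a)).
apply: leeB => //.
exact: le_trans (phistar_le_Fitz a ys) (Fitz_le_PA a ys mm).
Qed.

End Helpers.
Arguments PA_le_graph {R X A y ys}.
Theorem lemma3p4 (R : realType) (X : completeNormedModType R)
  (A : X -> (X -> R) -> Prop) :
  maximal_monotone A ->
  forall (w : X) (vs : X -> R) (x : X) (xs : X -> R),
    domA A w -> ImA A vs -> dual xs ->
    (Fitz A x vs <= gAv_conj A vs x /\ gAv_conj A vs x <= PA A x vs) /\
    (Fitz A w xs <= fAw_conj A w xs /\ fAw_conj A w xs <= PA A w xs).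
Proof.
move=> mm w vs x xs _ _ _; have [dA _] := mm.
split; split.
- apply: ge_ereal_sup => _ [p hp <-].
  have h1 : (p.2 x)%:E - gAv A vs p.2 <= gAv_conj A vs x.
    by apply: ereal_sup_ubound; exists p.2 => //; exact: (dA _ _ hp).
  apply: le_trans h1.
  have h2 : gAv A vs p.2 <= (p.2 p.1)%:E - (vs p.1)%:E.
    apply: le_trans (leeB (PA_le_graph mm hp) (le_refl _)).
    by apply: ereal_inf_lbound; exists p.1.
  apply: le_trans _ (leeB (le_refl _) h2).
  rewrite -!EFinB lee_fin /=; lra.
- apply: ge_ereal_sup => _ [ys dy <-].
  apply: swap; apply: le_ereal_inf_tmp => _ [a _ <-].
  apply: swap2; apply: swap; exact: KEY.
- apply: ge_ereal_sup => _ [p hp <-].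
  have h1 : (xs p.1)%:E - fAw A w p.1 <= fAw_conj A w xs.
    by apply: ereal_sup_ubound; exists p.1.
  apply: le_trans h1.
  have h2 : fAw A w p.1 <= (p.2 p.1)%:E - (p.2 w)%:E.
    apply: le_trans (leeB (PA_le_graph mm hp) (le_refl _)).
    by apply: ereal_inf_lbound; exists p.2 => //; exact: (dA _ _ hp).
  apply: le_trans _ (leeB (le_refl _) h2).
  rewrite -!EFinB lee_fin /=; lra.
- apply: ge_ereal_sup => _ [y _ <-].
  apply: swap; apply: le_ereal_inf_tmp => _ [a da <-].
  apply: swap2; apply: swap; rewrite (addrC (xs y)); exact: KEY.
Qed.
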